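(* If $(S,K,I)$ is a split graph, then the factor graph $\Phi(S)$ cannot contain an induced path $v_1v_2v_3v_4$ with $\sigma_{23}=1$ and $d_1\geq d_2\leq d_4$.
   Context: A split graph $(S,K,I)$ is a graph $S$ together with a fixed partition $V(S)=K\dot\cup I$, where $K$ is a clique and $I$ is an independent set. For a vertex $v_i$ of $S$, $N_i$ denotes its open neighborhood in $S$ and $d_i=|N_i|$; $\eta_{uv}=|N_u\cap N_v|$. The factor graph $\Phi(S)$ is the loopless multigraph with vertex set $I$ in which, for distinct $u,v\in I$, there is one edge joining $u$ and $v$ for each 2-switch of $S$ acting on $u$ and $v$ (a 2-switch replaces edges $ab,cd$ with $ac,bd$ when $ab,cd\in E(S)$ and $ac,bd\notin E(S)$); equivalently, the multiplicity of $uv$ is $\sigma_{uv}=(d_u-\eta_{uv})(d_v-\eta_{uv})$, and $u,v$ are adjacent iff $\sigma_{uv}>0$; $\sigma_{ij}$ denotes $\sigma_{v_iv_j}$. An induced path in $\Phi(S)$ consists of distinct vertices with consecutive ones adjacent and no other pair adjacent (multiplicities ignored). *)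

(* Defs.v *)
From mathcomp Require Import all_boot.
Set Implicit Arguments. Unset Strict Implicit. Unset Printing Implicit Defensive.

Definition simple_graph (T : finType) (e : rel T) : Prop :=
  symmetric e /\ irreflexive e.

Definition split_graph (T : finType) (e : rel T) (K I : {set T}) : Prop :=
  [/\ simple_graph e,
      K :&: I = set0, K :|: I = [set: T],
      {in K &, forall x y, x != y -> e x y}
    & {in I &, forall x y, ~~ e x y}].

Section Params.
Variables (T : finType) (e : rel T).
Definition nbhd (v : T) : {set T} := [set w | e v w].
Definition deg (v : T) : nat := #|nbhd v|.
Definition eta (u v : T) : nat := #|nbhd u :&: nbhd v|.
(* multiplicity of uv in the factor graph *)
Definition sigma (u v : T) : nat := (deg u - eta u v) * (deg v - eta u v).
Definition phi_adj (I : {set T}) (u v : T) : bool :=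
  [&& u \in I, v \in I, u != v & 0 < sigma u v].
Definition phi_induced_P4 (I : {set T}) (v1 v2 v3 v4 : T) : Prop :=
  [/\ [/\ v1 \in I, v2 \in I, v3 \in I & v4 \in I],
      uniq [:: v1; v2; v3; v4],
      [/\ phi_adj I v1 v2, phi_adj I v2 v3 & phi_adj I v3 v4]
    & [/\ ~~ phi_adj I v1 v3, ~~ phi_adj I v1 v4 & ~~ phi_adj I v2 v4]].
End Params.

(* Main.v *)
Require Import Defs.
From mathcomp Require Import all_boot.
From mathcomp Require Import zify.

Lemma degD (T : finType) (e : rel T) u v :
  deg e u - eta e u v = #|nbhd e u :\: nbhd e v|.
Proof.
rewrite /deg /eta -(cardsID (nbhd e v) (nbhd e u)) setIC; lia.
Qed.

Lemma etaC (T : finType) (e : rel T) u v : eta e u v = eta e v u.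
Proof. by rewrite /eta setIC. Qed.

Lemma sig0 (T : finType) (e : rel T) u v : sigma e u v = 0 ->
  (nbhd e u \subset nbhd e v) \/ (nbhd e v \subset nbhd e u).
Proof.
rewrite /sigma degD etaC degD.
move/eqP; rewrite muln_eq0 !cards_eq0 !setD_eq0 => /orP[]; auto.
Qed.

Lemma sigp (T : finType) (e : rel T) u v : 0 < sigma e u v ->
  ~~ (nbhd e u \subset nbhd e v) /\ ~~ (nbhd e v \subset nbhd e u).
Proof.
rewrite /sigma degD etaC degD muln_gt0 !card_gt0.
by case/andP; rewrite !setD_eq0 => -> ->.
Qed.

Theorem lemma4p3 (T : finType) (e : rel T) (K I : {set T}) :
  split_graph e K I ->
  ~ (exists v1 v2 v3 v4 : T,
       [/\ phi_induced_P4 e I v1 v2 v3 v4,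
           sigma e v2 v3 = 1,
           deg e v2 <= deg e v1
         & deg e v2 <= deg e v4]).
Proof.
move=> _ [v1 [v2 [v3 [v4 [[[i1 i2 i3 i4] U [a12 a23 a34] [n13 n14 n24]] s23 d21 d24]]]]].
move: U; rewrite /= !inE !negb_or => /andP[/and3P[d12 d13 d14] /andP[/andP[d23 d24'] /andP[d34 _]]].
have N u v : u \in I -> v \in I -> u != v -> ~~ phi_adj e I u v -> 
  (nbhd e u \subset nbhd e v) \/ (nbhd e v \subset nbhd e u).
  move=> iu iv duv; rewrite /phi_adj iu iv duv /= lt0n negbK => /eqP; exact: sig0.
have P u v : phi_adj e I u v -> 
  ~~ (nbhd e u \subset nbhd e v) /\ ~~ (nbhd e v \subset nbhd e u).
  by case/and4P => _ _ _; apply: sigp.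
have [p12 q12] := P _ _ a12. have [p34 q34] := P _ _ a34.
have e23 : deg e v3 = deg e v2.
  move: s23; rewrite /sigma {1}etaC.
  move/eqP; rewrite muln_eq1 => /andP[/eqP h1 /eqP h2]. rewrite etaC in h2.
  have : eta e v3 v2 <= deg e v3 by rewrite /eta /deg subset_leq_card // subsetIl.
  have : eta e v3 v2 <= deg e v2 by rewrite /eta /deg subset_leq_card // subsetIr.
  move=> ha hb; clear -h1 h2 ha hb; lia.
have s24 : nbhd e v2 \subset nbhd e v4.
  case: (N _ _ i2 i4 d24' n24) => // h.
  have : nbhd e v4 == nbhd e v2 by rewrite eqEcard h.
  by move/eqP => ->.
have s14 : nbhd e v1 \subset nbhd e v4.
  case: (N _ _ i1 i4 d14 n14) => // h.
  by rewrite (subset_trans s24 h) in q12.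
have s13 : nbhd e v1 \subset nbhd e v3.
  case: (N _ _ i1 i3 d13 n13) => // h.
  by rewrite (subset_trans h s14) in p34.
have : nbhd e v1 == nbhd e v3 by rewrite eqEcard s13 -/(deg e v3) -/(deg e v1) e23.
move/eqP => E. by rewrite -E s14 in p34.
Qed.
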